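(* Assume $\lfloor (M_1+\dots+M_n)/p\rfloor=n-1$ (ample reduction). Then for every $l\in\{1,\dots,n-1\}$ and every subset $I\subset\{1,\dots,n\}$ with $|I|=l$ we have $(l-1)p<\sum_{i\in I}M_i<lp$.
   Context: $p,q$ are primes, $n$ a positive integer with $p>n\ge2$, $p>q$; $m_1,\dots,m_n$ are positive integers $<q$, and $M_i$ is the least positive integer with $M_i\equiv -m_iq^{-1}\pmod p$ (so $1\le M_i\le p-1$). *)

(* Defs.v *)
From mathcomp Require Import all_boot.
Set Implicit Arguments. Unset Strict Implicit. Unset Printing Implicit Defensive.

(* For a prime p not dividing q, "M = -m q^{-1} (mod p)" is written out as
   M * q + m = 0 (mod p) (multiply both sides by the unit q mod p).
   [is_least_M p q m M] : M is the least positive integer with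
   M = -m q^{-1} (mod p). *)
Definition congrM (p q m k : nat) : Prop := (k * q + m) %% p = 0.

Definition is_least_M (p q m M : nat) : Prop :=
  0 < M /\ congrM p q m M /\ (forall k, 0 < k -> congrM p q m k -> M <= k).

(* Main.v *)
Require Import Defs.
From mathcomp Require Import all_boot.
From mathcomp Require Import zify.

Lemma M_lt_p p q m M : prime p -> 0 < m < q -> q < p -> is_least_M p q m M -> M < p.
Proof.
move=> pp /andP[m0 mq] qp [M0 [cM minM]].
rewrite ltnNge; apply/negP => pM.
move: pM; rewrite leq_eqVlt => /orP[/eqP eMp|ltpM].
  move: cM; rewrite /congrM -eMp mulnC modnMDl modn_small; [lia|lia].
have c2 : congrM p q m (M - p).
  move: cM; rewrite /congrM.
  have -> : M * q + m = (M - p) * q + m + p * q by rewrite mulnBl; have := leq_mul (ltnW ltpM) (leqnn q); lia.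
  by rewrite -modnDm modnMr addn0 modn_mod.
have := minM (M - p); rewrite subn_gt0 => /(_ ltpM c2); lia.
Qed.

Theorem lemma2p7 (p q n : nat) (m M : 'I_n -> nat) :
  prime p -> prime q -> 2 <= n -> n < p -> q < p ->
  (forall i, 0 < m i < q) ->
  (forall i, is_least_M p q (m i) (M i)) ->
  (\sum_(i < n) M i) %/ p = n.-1 ->
  forall l, 1 <= l <= n.-1 ->
  forall I : {set 'I_n}, #|I| = l ->
    (l.-1 * p < \sum_(i in I) M i) && (\sum_(i in I) M i < l * p).
Proof.
move=> pp qq n2 np qp hm hM hS l /andP[l1 ln] I cI.
have Mlt i : M i <= p.-1 by have := @M_lt_p p q (m i) (M i) pp (hm i) qp (hM i); lia.
have bnd (P : pred 'I_n) : \sum_(i in P) M i <= #|P| * p.-1.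
  rewrite -sum_nat_const; exact: leq_sum.
have h1 := bnd (mem I). rewrite cI in h1.
have h2 := bnd [predC I].
have hc : #|[predC I]| = n - l by have := cardC I; rewrite card_ord cI; lia.
rewrite hc in h2.
have hsplit : \sum_(i < n) M i = \sum_(i in I) M i + \sum_(i in [predC I]) M i.
  by rewrite (bigID (mem I)) /=.
have hge : n.-1 * p <= \sum_(i < n) M i.
  by rewrite -hS leq_trunc_div.
have p1 : 1 < p by apply: prime_gt1.
have h1' : \sum_(i in I) M i <= l * p.-1 := h1.
rewrite hsplit in hge.
move: h1' h2 hge; set A := \sum_(i in I) M i; set B := \sum_(i in [predC I]) M i.
move=> h1' h2 hge; clearbody A B.
clear -h1' h2 hge l1 ln np n2 qp.
have [L eL] : exists L, l = L.+1 by exists l.-1; lia.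
have [P eP] : exists P, p = P.+2 by exists (p - 2); lia.
have [K eK] : exists K, n = l + K.+1 by exists (n - l).-1; lia.
subst l p n.
rewrite !(addSn, addnS) /= in h1' h2 hge *.
move: h2; rewrite (_ : (L + K).+2 - L.+1 = K.+1); last lia.
move=> h2.
apply/andP; split; nia.
Qed.
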